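(* Consider a symbolic generalized matrix chain of $n\ge 4$ matrices. Let $\mathcal{E}_{\rm s}$ be a set of $n_{\rm c}$ variants constructed as follows: for each equivalence class $C$ of the size symbols, select a size variable $q_h\in C$ and add the corresponding fanning-out variant $E^h$ to $\mathcal{E}_{\rm s}$. Then $P(\mathcal{E}_{\rm s})$ is finite.
   Context: A generalized matrix chain (GMC) is a product $\mathrm{op}(M_1)\cdots\mathrm{op}(M_n)$ where $M_i$ has size $q_{i-1}\times q_i$, $\mathrm{op}(M)\in\{M,M^T,M^{-1},M^{-T}\}$, and each $M_i$ carries a structure (general, symmetric, lower-/upper-triangular; non-general structures imply squareness) and a property (singular, invertible, symmetric positive-definite, orthogonal). The shape is fixed and sizes are symbolic. If $M_i$ is necessarily square (non-general structure, or inverted), then $q_{i-1}$ and $q_i$ are bound by equality, written $q_{i-1}\sim q_i$; this relation generates an equivalence relation partitioning the size symbols $q_0,\ldots,q_n$ into $n_{\rm c}=n-n_{\rm sq}+1$ equivalence classes, $n_{\rm sq}$ being the number of necessarily square matrices. An instance is $\boldsymbol{q}\in\mathbb{N}^{n+1}$ with equal values within each equivalence class. Transposition is ignored. Each parenthesization determines exactly one variant: a sequence of $n-1$ associations $(K_i,(a_i,b_i,c_i))$, $0\le a_i<b_i<c_i\le n$, the $i$-th combining via kernel $K_i$ operands of sizes $q_{a_i}\times q_{b_i}$ and $q_{b_i}\times q_{c_i}$. It is built by performing the leftmost available association first and, per association: propagating an inversion to the result when both operands are inverted ($X^{-1}Y^{-1}=(YX)^{-1}$) or when one operand is inverted and general/symmetric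 while the other is orthogonal or non-singular triangular; assigning the most specialized matrix-product kernel (GEMM, SYMM, TRMM, SYSYMM, TRSYMM, TRTRMM) or linear-solve kernel (GEGESV, GESYSV, GETRSV, SYGESV, SYSYSV, SYTRSV, POGESV, POSYSV, POTRSV, TRSM, TRSYSV, TRTRSV; the inverted operand is the coefficient matrix); and inferring the features and sizes of the result by fixed rules. $\mathcal{A}$ is the set of all variants. The cost (FLOPs) of variant $A$ on $\boldsymbol{q}$ is $T(A,\boldsymbol{q})=\sum_{(K,(a,b,c))\in A}\phi_K(q_a,q_b,q_c)$, where each kernel cost has one of the forms, with positive kernel-specific constants: Type I $\beta abc$; Type IIa $\beta_1a^3+\beta_2a^2c$; Type IIb $\beta_1c^3+\beta_2c^2a$. Type II kernels are exactly the solves with a non-triangular coefficient matrix and general right-hand side (GEGESV: $\beta_1=2/3,\beta_2=2$; SYGESV, POGESV: $\beta_1=1/3,\beta_2=2$), IIa with the coefficient on the left ($a=b$), IIb on the right ($b=c$); all other kernels are Type I. Fanning-out variant $E^h$ ($h\in\{0,\ldots,n\}$): the variant of $(M_1(\cdots(M_{h-1}M_h)\cdots))((\cdots(M_{h+1}M_{h+2})\cdots)M_n)$, computing the prefix $M_1\cdots M_h$ right-to-left, the suffix $M_{h+1}\cdots M_n$ left-to-right, then associating the two results. Penalty: for $\mathcal{Z}\subseteq\mathcal{A}$ nonempty, $P(\mathcal{Z},\boldsymbol{q})=\frac{\min_{Z\in\mathcal{Z}}T(Z,\boldsymbol{q})}{\min_{A\in\mathcal{A}}T(A,\boldsymbol{q})}-1$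 (with $P(\emptyset,\boldsymbol{q})=\infty$), and total penalty $P(\mathcal{Z})=\sup_{\boldsymbol{q}}P(\mathcal{Z},\boldsymbol{q})$ over all instances. *)

(* Defs.v *)
From mathcomp Require Import all_boot all_order all_algebra.
Set Implicit Arguments. Unset Strict Implicit. Unset Printing Implicit Defensive.
Import Order.TTheory GRing.Theory Num.Theory.
Local Open Scope ring_scope.

Inductive structure := General | Symmetric | Lower | Upper.
Inductive property := Singular | Invertible | SPD | Orthogonal.
(* op(M) in {M, M^T, M^-1, M^-T}; transposition is ignored (only inversion matters). *)
Inductive mop := OpN | OpT | OpI | OpIT.

Record matrix_desc := MD { mstr : structure; mprop : property; mopr : mop }.

(* A symbolic GMC of n = size ch matrices; M_i (1 <= i <= n) has size q_{i-1} x q_i. *)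
Definition chain := seq matrix_desc.
Definition dflt_md := MD General Singular OpN.
Definition mat (ch : chain) (i : nat) : matrix_desc := nth dflt_md ch i.-1.

Definition inverted (o : mop) : bool :=
  match o with OpI | OpIT => true | _ => false end.
Definition is_general (s : structure) : bool :=
  match s with General => true | _ => false end.
Definition is_tri (s : structure) : bool :=
  match s with Lower | Upper => true | _ => false end.
Definition is_sym (s : structure) : bool :=
  match s with Symmetric => true | _ => false end.

Definition nec_square (m : matrix_desc) : bool :=
  ~~ is_general (mstr m) || inverted (mopr m).

(* The equivalence relation generated by q_{i-1} ~ q_i (M_i necessarily square).
   Since the generating links only join consecutive symbols, q_i and q_j are
   equivalent iff every matrix M_k with min(i,j) < k <= max(i,j) is necessarily
   square. *)
Definition same_class (ch : chain) (i j : nat) : bool :=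
  all (fun k => nec_square (mat ch k)) (iota (minn i j).+1 (maxn i j - minn i j)).

Definition instance (ch : chain) (q : nat -> nat) : Prop :=
  (forall i, (i <= size ch)%N -> (0 < q i)%N) /\
  (forall i j, (i <= size ch)%N -> (j <= size ch)%N -> same_class ch i j -> q i = q j).

Inductive kname :=
  GEMM | SYMM | TRMM | SYSYMM | TRSYMM | TRTRMM
| GEGESV | GESYSV | GETRSV | SYGESV | SYSYSV | SYTRSV
| POGESV | POSYSV | POTRSV | TRSM | TRSYSV | TRTRSV.

(* kleft: for a solve, whether the (inverted) coefficient matrix is the left operand *)
Record kernel := Kernel { kn : kname; kleft : bool }.

Section Cost.
Variable R : realFieldType.

Definition phi (betaI : kname -> R) (K : kernel) (x y z : R) : R :=
  let typeII (b1 b2 : R) :=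
    if kleft K then b1 * x ^+ 3 + b2 * x ^+ 2 * z
    else b1 * z ^+ 3 + b2 * z ^+ 2 * x in
  match kn K with
  | GEGESV => typeII (2%:R / 3%:R) 2%:R
  | SYGESV | POGESV => typeII (1 / 3%:R) 2%:R
  | k => betaI k * x * y * z
  end.
End Cost.

Record feat := Feat { fstr : structure; fprop : property; finv : bool }.

Definition nonsing (p : property) : bool :=
  match p with Singular => false | _ => true end.
Definition is_orth (p : property) : bool :=
  match p with Orthogonal => true | _ => false end.
Definition is_spd (p : property) : bool :=
  match p with SPD => true | _ => false end.

Definition prodK (s1 s2 : structure) : kname :=
  if is_tri s1 && is_tri s2 then TRTRMM
  else if (is_tri s1 && is_sym s2) || (is_sym s1 && is_tri s2) then TRSYMM
  else if is_sym s1 && is_sym s2 then SYSYMM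
  else if is_tri s1 || is_tri s2 then TRMM
  else if is_sym s1 || is_sym s2 then SYMM
  else GEMM.

Definition solveK (coef : feat) (rhs : structure) : kname :=
  match fstr coef with
  | General =>
      if is_tri rhs then GETRSV else if is_sym rhs then GESYSV else GEGESV
  | Symmetric =>
      if is_spd (fprop coef) then
        (if is_tri rhs then POTRSV else if is_sym rhs then POSYSV else POGESV)
      else (if is_tri rhs then SYTRSV else if is_sym rhs then SYSYSV else SYGESV)
  | Lower | Upper =>
      if is_tri rhs then TRTRSV else if is_sym rhs then TRSYSV else TRSM
  end.

Definition res_str (s1 s2 : structure) : structure :=
  match s1, s2 with
  | Lower, Lower => Lower
  | Upper, Upper => Upper
  | _, _ => General
  end.

Definition res_prop (sq : bool) (p1 p2 : property) : property :=
  if ~~ sq then Singular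
  else if ~~ nonsing p1 || ~~ nonsing p2 then Singular
  else if is_orth p1 && is_orth p2 then Orthogonal
  else Invertible.

(* One association of X (sizes q_a x q_b) with Y (sizes q_b x q_c):
   kernel used and features of the result. *)
Definition combine (ch : chain) (a b c : nat) (X Y : feat) : kernel * feat :=
  let sqX := same_class ch a b in
  let sqY := same_class ch b c in
  let sqR := same_class ch a c in
  let gs (Z : feat) := is_general (fstr Z) || is_sym (fstr Z) in
  let orthsq (Z : feat) (sqZ : bool) := is_orth (fprop Z) && sqZ in
  let partner_ok (Z : feat) (sqZ : bool) :=
    orthsq Z sqZ || (is_tri (fstr Z) && nonsing (fprop Z)) in
  let rf (inv : bool) := Feat (res_str (fstr X) (fstr Y))
                              (res_prop sqR (fprop X) (fprop Y)) inv in
  if finv X && finv Y then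
    (* X^-1 Y^-1 = (Y X)^-1 *)
    (Kernel (prodK (fstr Y) (fstr X)) true, rf true)
  else if finv X && gs X && partner_ok Y sqY then
    (* X^-1 Q = (Q^T X)^-1 ;  X^-1 T = (T^-1 X)^-1 *)
    (if orthsq Y sqY then Kernel (prodK (fstr Y) (fstr X)) true
     else Kernel (solveK Y (fstr X)) true, rf true)
  else if finv Y && gs Y && partner_ok X sqX then
    (* Q Y^-1 = (Y Q^T)^-1 ;  T Y^-1 = (Y T^-1)^-1 *)
    (if orthsq X sqX then Kernel (prodK (fstr Y) (fstr X)) true
     else Kernel (solveK X (fstr Y)) false, rf true)
  else if finv X then (Kernel (solveK X (fstr Y)) true, rf false)
  else if finv Y then (Kernel (solveK Y (fstr X)) false, rf false)
  else (Kernel (prodK (fstr X) (fstr Y)) true, rf false).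

Inductive tree := Leaf | Node of tree & tree.

Definition variant := seq (kernel * (nat * nat * nat)).

(* build t a: the subtree t multiplies M_{a+1} ... M_c; returns c, the
   features of the result and its associations, leftmost association first. *)
Fixpoint build (ch : chain) (t : tree) (a : nat) : nat * feat * variant :=
  match t with
  | Leaf => let m := mat ch a.+1 in
            (a.+1, Feat (mstr m) (mprop m) (inverted (mopr m)), [::])
  | Node l r =>
      let '(b, fl, vl) := build ch l a in
      let '(c, fr, vr) := build ch r b in
      let '(K, f) := combine ch a b c fl fr in
      (c, f, vl ++ vr ++ [:: (K, (a, b, c))])
  end.

Definition variant_of (ch : chain) (t : tree) : variant := (build ch t 0).2.

Fixpoint trees_fuel (fuel k : nat) : seq tree :=
  match fuel with
  | 0 => [::]
  | fuel'.+1 =>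
      if k == 1%N then [:: Leaf]
      else flatten [seq [seq Node l r | l <- trees_fuel fuel' i,
                                        r <- trees_fuel fuel' (k - i)]
                   | i <- iota 1 k.-1]
  end.
Definition trees (k : nat) : seq tree := trees_fuel k k.

Definition all_variants (ch : chain) : seq variant :=
  [seq variant_of ch t | t <- trees (size ch)].

Fixpoint rcomb (k : nat) : tree :=
  match k with
  | 0 | 1 => Leaf
  | k'.+1 => Node Leaf (rcomb k')
  end.
Fixpoint lcomb (k : nat) : tree :=
  match k with
  | 0 | 1 => Leaf
  | k'.+1 => Node (lcomb k') Leaf
  end.
Definition fan_tree (n h : nat) : tree :=
  if h == 0%N then lcomb n
  else if h == n then rcomb n
  else Node (rcomb h) (lcomb (n - h)).

Definition fan_variant (ch : chain) (h : nat) : variant :=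
  variant_of ch (fan_tree (size ch) h).

Section Penalty.
Variable R : realFieldType.

Definition cost (betaI : kname -> R) (v : variant) (q : nat -> nat) : R :=
  \sum_(x <- v) phi betaI x.1 (q x.2.1.1)%:R (q x.2.1.2)%:R (q x.2.2)%:R.

Definition minR (s : seq R) : R :=
  match s with [::] => 0 | x :: s' => foldr Num.min x s' end.

(* P(Z, q) for nonempty Z *)
Definition penalty (betaI : kname -> R) (ch : chain) (Z : seq variant)
    (q : nat -> nat) : R :=
  minR [seq cost betaI z q | z <- Z] /
  minR [seq cost betaI A q | A <- all_variants ch] - 1.

(* P(Z) = sup_q P(Z, q) < oo  (P(empty) = oo) *)
Definition finite_total_penalty (betaI : kname -> R) (ch : chain)
    (Z : seq variant) : Prop :=
  Z <> [::] /\
  exists B : R, forall q : nat -> nat, instance ch q -> penalty betaI ch Z q <= B.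
End Penalty.

(* Main.v *)
Require Import Defs.
From mathcomp Require Import all_boot all_order all_algebra.
From mathcomp Require Import ring lra zify.
From Stdlib Require List.
Import Order.TTheory GRing.Theory Num.Theory.
Local Open Scope ring_scope.
Local Notation finv := Defs.finv.
Local Notation is_sym := Defs.is_sym.
Definition typeII (K : kernel) : bool :=
  match kn K with GEGESV | SYGESV | POGESV => true | _ => false end.
Definition gs (s : structure) := is_general s || is_sym s.

Definition sqf (X : feat) (s : bool) :=
  finv X || ~~ is_general (fstr X) || (is_orth (fprop X) && s).

Definition cfacts (X Y : feat) sab sbc (Kf : kernel * feat) : bool :=
  [&& typeII Kf.1 ==> (if kleft Kf.1 then finv X && gs (fstr X) else finv Y && gs (fstr Y)),
      finv X && gs (fstr X) ==> (typeII Kf.1 && kleft Kf.1) || sqf Y sbc,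
      finv Y && gs (fstr Y) ==> (typeII Kf.1 && ~~ kleft Kf.1) || sqf X sab &
      finv Kf.2 || ~~ is_general (fstr Kf.2) ==> sqf X sab && sqf Y sbc].

Lemma combine_factsb ch a b c X Y :
  cfacts X Y (same_class ch a b) (same_class ch b c) (combine ch a b c X Y).
Proof.
rewrite /combine.
case: (same_class ch a b); case: (same_class ch b c);
case: X => [[] [] []]; case: Y => [[] [] []]; vm_compute; reflexivity.
Qed.

Definition allk := [:: GEMM; SYMM; TRMM; SYSYMM; TRSYMM; TRTRMM;
 GEGESV; GESYSV; GETRSV; SYGESV; SYSYSV; SYTRSV;
 POGESV; POSYSV; POTRSV; TRSM; TRSYSV; TRTRSV].

Section R.
Variable R : realFieldType.
Lemma foldr_min_le (x0 : R) s y : y \in x0 :: s -> foldr Num.min x0 s <= y.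
Proof.
elim: s => [|z s IH] /=; first by rewrite inE => /eqP ->.
rewrite !inE ge_min => /orP [Hy|/orP[/eqP ->|H]].
- by apply/orP; right; apply: IH; rewrite inE Hy.
- by rewrite lexx.
- by apply/orP; right; apply: IH; rewrite inE H orbT.
Qed.
Lemma foldr_min_ge (x0 : R) s lb : (forall y, y \in x0 :: s -> lb <= y) -> lb <= foldr Num.min x0 s.
Proof.
elim: s => [|z s IH] /= H; first by apply: H; rewrite inE.
rewrite le_min H ?inE ?eqxx ?orbT //= IH // => y; rewrite inE => /orP[/eqP ->|Hy].
  by apply: H; rewrite inE eqxx.
by apply: H; rewrite !inE Hy !orbT.
Qed.
Lemma foldr_max_ge (x0 : R) s y : y \in x0 :: s -> y <= foldr Num.max x0 s.
Proof.
elim: s => [|z s IH] /=; first by rewrite inE => /eqP ->.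
rewrite !inE le_max => /orP [Hy|/orP[/eqP ->|H]].
- by apply/orP; right; apply: IH; rewrite inE Hy.
- by rewrite lexx.
- by apply/orP; right; apply: IH; rewrite inE H orbT.
Qed.

Variable betaI : kname -> R.
Hypothesis Hb : forall k, 0 < betaI k.
Definition bmin := foldr Num.min (1/3%:R) [seq betaI k | k <- allk].
Definition bmax := foldr Num.max 2%:R [seq betaI k | k <- allk].
Lemma bmin_le k : bmin <= betaI k.
Proof. by case: k; apply: foldr_min_le; rewrite /= !inE eqxx ?orbT. Qed.
Lemma bmin_le3 : bmin <= 1/3%:R.
Proof. by apply: foldr_min_le; rewrite inE eqxx. Qed.
Lemma bmin_gt0 : 0 < bmin.
Proof.
rewrite /bmin; elim: allk => [|k s IH] /=; first by rewrite divr_gt0.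
by rewrite lt_min Hb IH.
Qed.
Lemma bmax_ge k : betaI k <= bmax.
Proof. by case: k; apply: foldr_max_ge; rewrite /= !inE eqxx ?orbT. Qed.
Lemma bmax_ge2 : 2%:R <= bmax.
Proof. by apply: foldr_max_ge; rewrite inE eqxx. Qed.


Lemma aux1 (b1 b2 m u w : R) : 0 <= u -> 0 <= w -> 0 <= b1 -> m <= b2 ->
  m * (u * u * w) <= b1 * u ^+ 3 + b2 * u ^+ 2 * w.
Proof.
move=> u0 w0 b10 mb; apply: ler_wpDl; first by rewrite mulr_ge0 ?exprn_ge0.
by rewrite expr2 -!mulrA ler_wpM2r // !mulr_ge0.
Qed.
Lemma aux2 (b1 b2 m u w : R) : 0 <= u -> 0 <= w -> 0 <= b1 -> m <= b2 ->
  m * (w * u * u) <= b1 * u ^+ 3 + b2 * u ^+ 2 * w.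
Proof.
move=> u0 w0 b10 mb; rewrite (_ : w * u * u = u * u * w); last by ring.
exact: aux1.
Qed.
Lemma aux3 (b1 b2 m u w : R) : 0 <= u -> 0 <= w -> 0 <= b2 -> m <= b1 ->
  m * u ^+ 3 <= b1 * u ^+ 3 + b2 * u ^+ 2 * w.
Proof.
move=> u0 w0 b20 mb; apply: ler_wpDr; first by rewrite !mulr_ge0 ?exprn_ge0.
by rewrite ler_wpM2r // exprn_ge0.
Qed.
Lemma aux4 (b1 b2 M u w : R) : 0 <= u -> 0 <= w -> b1 <= M -> b2 <= M -> 
  b1 * u ^+ 3 + b2 * u ^+ 2 * w <= M * (u * u * w + u ^+ 3).
Proof.
move=> u0 w0 h1 h2; rewrite mulrDr addrC lerD //.
  by rewrite expr2 -!mulrA ler_wpM2r // !mulr_ge0.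
by rewrite ler_wpM2r // exprn_ge0.
Qed.
Lemma aux5 (b1 b2 M u w : R) : 0 <= u -> 0 <= w -> b1 <= M -> b2 <= M -> 
  b1 * u ^+ 3 + b2 * u ^+ 2 * w <= M * (w * u * u + u ^+ 3).
Proof.
move=> u0 w0 h1 h2; rewrite (_ : w * u * u = u * u * w); last by ring.
exact: aux4.
Qed.

Lemma phi_lb K (x y z : R) : 0 <= x -> 0 <= y -> 0 <= z ->
  (typeII K -> if kleft K then x = y else y = z) ->
  bmin * (x * y * z) <= phi betaI K x y z.
Proof.
move=> x0 y0 z0; have b0 := bmin_gt0; have b3 := bmin_le3.
case: K => [[] [|]] /= H; rewrite /phi /=;
  try (rewrite -!mulrA; apply: ler_wpM2r; [by rewrite !mulr_ge0|exact: bmin_le]);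
  rewrite (H isT); first [apply: aux1|apply: aux2]; rewrite ?ler0n ?divr_ge0 ?ler0n //;
  apply: (le_trans b3); lra.
Qed.

Lemma phi_cube K (x y z : R) : 0 <= x -> 0 <= y -> 0 <= z -> typeII K ->
  bmin * (if kleft K then x ^+ 3 else z ^+ 3) <= phi betaI K x y z.
Proof.
move=> x0 y0 z0; have b0 := bmin_gt0; have b3 := bmin_le3.
case: K => [[] [|]] //= _; rewrite /phi /=; apply: aux3; rewrite ?ler0n //;
  apply: (le_trans b3); lra.
Qed.

Lemma phi_ub K (x y z : R) : 0 <= x -> 0 <= y -> 0 <= z ->
  (typeII K -> if kleft K then x = y else y = z) ->
  phi betaI K x y z <= bmax * (x * y * z + (if typeII K && kleft K then x ^+ 3 else 0)
     + (if typeII K && ~~ kleft K then z ^+ 3 else 0)).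
Proof.
move=> x0 y0 z0; have b2 := bmax_ge2.
case: K => [[] [|]] /= H; rewrite /phi /= ?addr0;
  try (rewrite -!mulrA; apply: ler_wpM2r; [by rewrite !mulr_ge0|exact: bmax_ge]);
  rewrite (H isT) /= ?addr0 ?add0r; first [apply: aux4|apply: aux5]; rewrite //;
  apply: le_trans b2; lra.
Qed.

Variable ch : chain.
Variable q : nat -> nat.
Hypothesis Hq : instance ch q.
Local Notation n := (size ch).
Local Notation Q i := ((q i)%:R : R).

Lemma Qsc i j : (i <= n)%N -> (j <= n)%N -> same_class ch i j -> Q i = Q j.
Proof. by move=> hi hj hs; rewrite (Hq.2 i j hi hj hs). Qed.

Definition ph (x : kernel * (nat * nat * nat)) :=
  phi betaI x.1 (Q x.2.1.1) (Q x.2.1.2) (Q x.2.2).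

Lemma comb_R a b c X Y : (a <= n)%N -> (b <= n)%N -> (c <= n)%N ->
 (finv X || ~~ is_general (fstr X) -> Q a = Q b) ->
 (finv Y || ~~ is_general (fstr Y) -> Q b = Q c) ->
 let Kf := combine ch a b c X Y in let x := (Kf.1, (a, b, c)) in
 [/\ bmin * (Q a * Q b * Q c) <= ph x,
     ph x <= bmax * (Q a * Q b * Q c + (if typeII Kf.1 && kleft Kf.1 then Q a ^+ 3 else 0)
        + (if typeII Kf.1 && ~~ kleft Kf.1 then Q c ^+ 3 else 0)),
     (typeII Kf.1 && kleft Kf.1 -> finv X && gs (fstr X)) /\
     (typeII Kf.1 && ~~ kleft Kf.1 -> finv Y && gs (fstr Y)),
     (finv X && gs (fstr X)) || (finv Y && gs (fstr Y)) -> bmin * Q b ^+ 3 <= ph x &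
     finv Kf.2 || ~~ is_general (fstr Kf.2) -> Q a = Q c].
Proof.
move=> ha hb hc HX HY /=.
have := combine_factsb ch a b c X Y; rewrite /cfacts /ph /=.
case: (combine ch a b c X Y) => K f /=; case/and4P => F1 F2 F3 F4.
have sX : sqf X (same_class ch a b) -> Q a = Q b.
  by rewrite /sqf => /orP [H|/andP [_ H]]; [exact: HX | exact: Qsc].
have sY : sqf Y (same_class ch b c) -> Q b = Q c.
  by rewrite /sqf => /orP [H|/andP [_ H]]; [exact: HY | exact: Qsc].
have Htyp : typeII K -> if kleft K then Q a = Q b else Q b = Q c.
  move=> t; move: F1; rewrite t /=; case: (kleft K) => /andP [fi _];
  [apply: HX|apply: HY]; by rewrite fi.
have g0 : forall i, 0 <= Q i by move=> i; rewrite ler0n.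
split.
- by apply: phi_lb.
- by apply: phi_ub.
- split; first by move/andP=> [t l]; move: F1; rewrite t l.
  by move/andP=> [t l]; move: F1; rewrite t (negbTE l).
- case/orP => H.
  + have eab : Q a = Q b by apply: HX; case/andP: H => ->.
    case/orP: (implyP F2 H) => [/andP [t l]|sq].
    * by have := phi_cube K (Q a) (Q b) (Q c) (g0 a) (g0 b) (g0 c) t; rewrite l eab.
    * have := phi_lb K (Q a) (Q b) (Q c) (g0 a) (g0 b) (g0 c) Htyp.
      by rewrite eab -(sY sq) -expr2 -exprSr.
  + have ebc : Q b = Q c by apply: HY; case/andP: H => ->.
    case/orP: (implyP F3 H) => [/andP [t l]|sq].
    * by have := phi_cube K (Q a) (Q b) (Q c) (g0 a) (g0 b) (g0 c) t; rewrite (negbTE l) ebc.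
    * have := phi_lb K (Q a) (Q b) (Q c) (g0 a) (g0 b) (g0 c) Htyp.
      by rewrite -ebc (sX sq) -expr2 -exprSr.
- by move/(implyP F4)/andP => [/sX -> /sY].
Qed.

Fixpoint leaves (t : tree) : nat :=
  match t with Leaf => 1%N | Node l r => (leaves l + leaves r)%N end.
Lemma leaves_gt0 t : (0 < leaves t)%N.
Proof. elim: t => //= l IHl r IHr; lia. Qed.

Definition lf i := Feat (mstr (mat ch i)) (mprop (mat ch i)) (inverted (mopr (mat ch i))).
Definition G i := inverted (mopr (mat ch i)) && gs (mstr (mat ch i)).

Lemma leaf_sq a : (a < n)%N -> finv (lf a.+1) || ~~ is_general (fstr (lf a.+1)) -> Q a = Q a.+1.
Proof.
move=> ha H; apply: Qsc => //; first exact: ltnW.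
rewrite /same_class (minn_idPl (leqnSn a)) (maxn_idPr (leqnSn a)) subSnn /= andbT.
by rewrite /nec_square orbC.
Qed.

Definition ia (x : kernel * (nat * nat * nat)) := x.2.1.1.
Definition ib (x : kernel * (nat * nat * nat)) := x.2.1.2.
Definition ic (x : kernel * (nat * nat * nat)) := x.2.2.

Definition UB x := exists cx cy : bool,
  [/\ ph x <= bmax * (Q (ia x) * Q (ib x) * Q (ic x) + (if cx then Q (ia x) ^+ 3 else 0)
        + (if cy then Q (ic x) ^+ 3 else 0)),
      (cx -> Q (ia x) = Q (ib x)), (cy -> Q (ib x) = Q (ic x)),
      (cx -> ib x = (ia x).+1 -> G (ib x)) & (cy -> ic x = (ib x).+1 -> G (ic x))].

Definition assoc_ok a c x :=
  [/\ (a <= ia x)%N, (ic x <= c)%N, (ia x < ib x < ic x)%N,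
      bmin * (Q (ia x) * Q (ib x) * Q (ic x)) <= ph x & UB x].

Lemma build_inv t : forall a, (a + leaves t <= n)%N ->
  let r := build ch t a in
  [/\ r.1.1 = (a + leaves t)%N,
      finv r.1.2 || ~~ is_general (fstr r.1.2) -> Q a = Q r.1.1,
      leaves t = 1%N -> (finv r.1.2 && gs (fstr r.1.2)) = G r.1.1,
      forall x, List.In x r.2 -> assoc_ok a r.1.1 x &
      ((1 < leaves t)%N -> exists x, List.In x r.2 /\ ia x = a /\ ic x = r.1.1) /\
      (forall i, (a < i <= r.1.1)%N -> (1 < leaves t)%N -> exists x, List.In x r.2 /\
         ((ia x = i.-1 /\ ib x = i) \/ (ib x = i.-1 /\ ic x = i)) /\
         (G i -> bmin * Q i ^+ 3 <= ph x))].
Proof.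
elim: t => [|l IHl r IHr] a Ha /=.
  split => //; first by rewrite addn1.
  by apply: leaf_sq; rewrite addn1 in Ha.
move: Ha => /= Ha.
have hl := leaves_gt0 l; have hr := leaves_gt0 r.
have := IHl a ltac:(lia).
case El: (build ch l a) => [[b fl] vl] /= [Hb1 Hb2 Hb3 Hb4 [Hb5 Hb6]].
have := IHr b ltac:(lia).
case Er: (build ch r b) => [[c fr] vr] /= [Hc1 Hc2 Hc3 Hc4 [Hc5 Hc6]].
have := @comb_R a b c fl fr ltac:(lia) ltac:(lia) ltac:(lia) Hb2 Hc2.
case Ec: (combine ch a b c fl fr) => [K f] /= [C1 C2 [C3 C4] C5 C6].
have ab : (a < b)%N by rewrite Hb1 -addn1 leq_add2l.
have bc : (b < c)%N by rewrite Hc1 -addn1 leq_add2l.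
have Hnew : List.In (K, (a, b, c)) (vl ++ vr ++ [:: (K, (a, b, c))]).
  by apply/List.in_app_iff; right; apply/List.in_app_iff; right; left.
split => //.
- by rewrite Hc1 Hb1 addnA.
- by move=> e; have := leq_add hl hr; rewrite e.
- move=> x /List.in_app_iff [/Hb4|/List.in_app_iff [/Hc4|[<-|//]]].
  + case=> h1 h2 h3 h4 h5; split => //; apply: leq_trans h2 _; exact: ltnW.
  + case=> h1 h2 h3 h4 h5; split => //; apply: leq_trans _ h1; exact: ltnW.
  + split => //=; first by rewrite /ia /ib /ic /= ab bc.
    exists (typeII K && kleft K), (typeII K && ~~ kleft K); split => //=.
    * by move/C3; move=> /andP [fi _]; apply: Hb2; rewrite fi.
    * by move/C4; move=> /andP [fi _]; apply: Hc2; rewrite fi.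
    * move/C3 => H e; rewrite -Hb3 //; move: e Hb1; rewrite /ia /ib /=; clear; lia.
    * move/C4 => H e; rewrite -Hc3 //; move: e Hc1; rewrite /ib /ic /=; clear; lia.
split.
  by move=> _; exists (K, (a, b, c)).
move=> i hi _.
case: (leqP i b) => hib.
  case: (ltnP 1 (leaves l)) => hl1.
    have [x [xin xx]] := Hb6 i ltac:(move: hi hib; clear; lia) hl1.
    by exists x; split => //; apply/List.in_app_iff; left.
  have ei : i = b by move: hi hib hl1 hl Hb1; clear; lia.
  subst i; exists (K, (a, b, c)); split => //; split.
    by left; rewrite /ia /ib /=; split => //; move: hl1 hl Hb1; clear; lia.
  have el : leaves l = 1%N by move: hl1 hl; clear; lia.
  by move=> Gb; apply: C5; rewrite (Hb3 el) Gb.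
case: (ltnP 1 (leaves r)) => hr1.
  have [x [xin xx]] := Hc6 i ltac:(move: hi hib; clear; lia) hr1.
  by exists x; split => //; apply/List.in_app_iff; right; apply/List.in_app_iff; left.
have er : leaves r = 1%N by move: hr1 hr; clear; lia.
have ei : i = c by move: hi hib er Hc1; clear; lia.
subst i; exists (K, (a, b, c)); split => //; split.
  by right; rewrite /ib /ic /=; split => //; move: er Hc1; clear; lia.
move=> Gc; have fr1 : finv fr && gs (fstr fr) by rewrite Hc3.
have ebc : Q b = Q c by apply: Hc2; case/andP: fr1 => ->.
by rewrite -ebc; apply: C5; rewrite fr1 orbT.
Qed.

Lemma build_end t a : (build ch t a).1.1 = (a + leaves t)%N.
Proof.
elim: t a => [|l IHl r IHr] a /=; first by rewrite addn1.
move: (IHl a); case: (build ch l a) => [[b fl] vl] /= ->.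
move: (IHr (a + leaves l)%N); case: (build ch r _) => [[c fr] vr] /= ->.
by case: (combine _ _ _ _ _ _) => K f /=; rewrite addnA.
Qed.

Lemma build_size t a : size (build ch t a).2 = (leaves t).-1.
Proof.
elim: t a => [|l IHl r IHr] a //=.
move: (IHl a); case: (build ch l a) => [[b fl] vl] /= e1.
move: (IHr b); case: (build ch r b) => [[c fr] vr] /= e2.
case: (combine _ _ _ _ _ _) => K f /=.
rewrite !size_cat e1 e2 /=; have := leaves_gt0 l; have := leaves_gt0 r; lia.
Qed.

Lemma leaves_rcomb k : (0 < k)%N -> leaves (rcomb k) = k.
Proof.
elim: k => [|k IH] // _; case: k IH => [|k] IH //.
have -> : rcomb k.+2 = Node Leaf (rcomb k.+1) by [].
by rewrite /= IH.
Qed.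

Lemma leaves_lcomb k : (0 < k)%N -> leaves (lcomb k) = k.
Proof.
elim: k => [|k IH] // _; case: k IH => [|k] IH //.
have -> : lcomb k.+2 = Node (lcomb k.+1) Leaf by [].
by rewrite /= IH // addn1.
Qed.

Lemma rcomb_idx k : forall a x, List.In x (build ch (rcomb k) a).2 ->
  ib x = (ia x).+1 /\ ic x = (a + k)%N.
Proof.
elim: k => [|k IH] a x //; case: k IH => [|k] IH //.
have hIH := IH a.+1; have hend := build_end (rcomb k.+1) a.+1.
have hT := @leaves_rcomb k.+1 isT.
have -> : rcomb k.+2 = Node Leaf (rcomb k.+1) by [].
move: (rcomb k.+1) hIH hend hT => T hIH hend hT /=.
move: hIH hend; case: (build ch T a.+1) => [[c fr] vr] /= hIH hend.
case: (combine _ _ _ _ _ _) => K f /=.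
move=> /List.in_app_iff [/hIH|[<-|//]].
  by case=> -> ->; split => //; rewrite addSnnS.
by rewrite /ib /ia /ic /= hend hT; split => //; rewrite addSnnS.
Qed.

Lemma lcomb_idx k : forall a x, List.In x (build ch (lcomb k) a).2 ->
  ia x = a /\ ic x = (ib x).+1.
Proof.
elim: k => [|k IH] a x //; case: k IH => [|k] IH //.
have hIH := IH a.
have -> : lcomb k.+2 = Node (lcomb k.+1) Leaf by [].
move: (lcomb k.+1) hIH => T hIH /=.
move: hIH; case: (build ch T a) => [[b fl] vl] /= hIH.
case: (combine _ _ _ _ _ _) => K f /=.
by move=> /List.in_app_iff [/hIH|/= [<-|//]].
Qed.

Lemma leaves_fan h : (1 < n)%N -> (h <= n)%N -> leaves (fan_tree n h) = n.
Proof.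
move=> n1 hn; rewrite /fan_tree; case: eqP => [_|h0]; first by rewrite leaves_lcomb //; lia.
case: eqP => [_|hn']; first by rewrite leaves_rcomb //; lia.
rewrite /= leaves_rcomb ?leaves_lcomb; lia.
Qed.

Lemma fan_idx h x : (h <= n)%N -> List.In x (fan_variant ch h) ->
  (ia x = h /\ ic x = (ib x).+1) \/ (ic x = h /\ ib x = (ia x).+1) \/
  (ia x = 0%N /\ ib x = h /\ ic x = n).
Proof.
move=> hn; rewrite /fan_variant /variant_of /fan_tree.
case: eqP => [->|h0]; first by move/lcomb_idx; left.
case: eqP => [->|hn']; first by move/rcomb_idx => [e1 e2]; right; left.
have hb := build_end (rcomb h) 0; rewrite leaves_rcomb in hb; last by lia.
have hc := build_end (lcomb (n - h)) h.
rewrite leaves_lcomb in hc; last by lia.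
have Hl := @lcomb_idx (n - h) h.
have Hr := @rcomb_idx h 0.
move: hb Hr; rewrite /=; case: (build ch (rcomb h) 0) => [[b fl] vl] /= eb Hr.
subst b; move: hc Hl; case: (build ch (lcomb _) h) => [[c fr] vr] /= ec Hl.
case: (combine _ _ _ _ _ _) => K f /=.
move=> /List.in_app_iff [/Hr|/List.in_app_iff [/Hl|[<-|//]]].
- by rewrite add0n => -[]; right; left.
- by left.
- by right; right; rewrite /ia /ib /ic /= ec; split => //; split => //; lia.
Qed.

Lemma sum_ge0 {T} (F : T -> R) s : (forall y, List.In y s -> 0 <= F y) ->
  0 <= \sum_(y <- s) F y.
Proof.
elim: s => [|z s IH] H; first by rewrite big_nil.
rewrite big_cons addr_ge0 //; first by apply: H; left.
by apply: IH => y hy; apply: H; right.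
Qed.

Lemma sum_ge_elem {T} (F : T -> R) s x : (forall y, List.In y s -> 0 <= F y) ->
  List.In x s -> F x <= \sum_(y <- s) F y.
Proof.
elim: s => [|z s IH] H //= [e|xs]; rewrite big_cons.
  subst z; rewrite lerDl; apply: sum_ge0 => y hy; apply: H; right.
  done.
apply: ler_wpDl; first by apply: H; left.
by apply: IH => // y hy; apply: H; right.
Qed.

Lemma sum_le_const {T} (F : T -> R) s C : (forall y, List.In y s -> F y <= C) ->
  \sum_(y <- s) F y <= (size s)%:R * C.
Proof.
elim: s => [|z s IH] H; first by rewrite big_nil mul0r.
rewrite big_cons /= -add1n natrD mulrDl mul1r lerD //; first by apply: H; left.
by apply: IH => y hy; apply: H; right.
Qed.

Lemma In_iota i a k : List.In i (iota a k) -> (a <= i < a + k)%N.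
Proof.
elim: k a => [|k IH] a //= [<-|/IH]; first by rewrite leqnn /= addnS ltnS leq_addr.
by move=> /andP [h1 h2]; rewrite ltnW //= addnS -addSn.
Qed.

Lemma mem_In (i : nat) s : i \in s -> List.In i s.
Proof. by elim: s => [|z s IH] //=; rewrite inE => /orP [/eqP ->|/IH]; [left|right]. Qed.

Section Bounds.
Variable m : nat.
Hypothesis Hm : (m <= n)%N.
Hypothesis Hmin : forall j, (j <= n)%N -> (q m <= q j)%N.
Local Notation qmin := (Q m).
Definition S := \sum_(j <- iota 0 n) Q j * Q j.+1 + Q 0 * Q n.
Definition L := \sum_(j <- iota 1 n) (if G j then Q j ^+ 3 else 0).
Definition U := qmin * S + L.

Lemma Qmin j : (j <= n)%N -> qmin <= Q j.
Proof. by move=> hj; rewrite ler_nat Hmin. Qed.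
Lemma Q0 j : 0 <= Q j. Proof. by rewrite ler0n. Qed.
Lemma Qpos j : (j <= n)%N -> 0 < Q j.
Proof. by move=> hj; rewrite ltr0n; apply: Hq.1. Qed.

Lemma L_ge0 : 0 <= L.
Proof. by apply: sum_ge0 => y _; case: (G y); rewrite ?exprn_ge0 ?Q0. Qed.

Lemma pairS j : (j < n)%N -> Q j * Q j.+1 <= S.
Proof.
move=> hj; rewrite /S; apply: ler_wpDr; first by rewrite mulr_ge0 ?Q0.
have := @sum_ge_elem _ (fun j => Q j * Q j.+1) (iota 0 n) j; apply.
  by move=> y _; rewrite mulr_ge0 ?Q0.
by apply: mem_In; rewrite mem_iota.
Qed.

Lemma QnS : Q 0 * Q n <= S.
Proof.
rewrite /S lerDr; apply: sum_ge0 => y _; by rewrite mulr_ge0 ?Q0.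
Qed.

Lemma S_ge0 : 0 <= S.
Proof. by apply: le_trans QnS; rewrite mulr_ge0 ?Q0. Qed.

Lemma cubeU c : (0 < c <= n)%N -> G c -> Q c ^+ 3 <= U.
Proof.
move=> hc gc; rewrite /U; apply: ler_wpDl; first by rewrite mulr_ge0 ?Q0 ?S_ge0.
have := @sum_ge_elem _ (fun j => if G j then Q j ^+ 3 else 0) (iota 1 n) c.
rewrite gc; apply.
  by move=> y _; case: (G y); rewrite ?exprn_ge0 ?Q0.
by apply: mem_In; rewrite mem_iota add1n ltnS.
Qed.

Lemma minS_U : qmin * S <= U.
Proof. by rewrite /U lerDl L_ge0. Qed.

Lemma mincubeU : qmin ^+ 3 <= U.
Proof.
apply: le_trans minS_U; rewrite exprS; apply: ler_wpM2l; first exact: Q0.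
apply: le_trans QnS; rewrite expr2; apply: ler_pM; rewrite ?Q0 //; apply: Qmin => //.
Qed.

Lemma U_gt0 : 0 < U.
Proof.
rewrite /U; apply: ltr_wpDr; first exact: L_ge0.
rewrite mulr_gt0 ?Qpos //; apply: lt_le_trans QnS; rewrite mulr_gt0 ?Qpos //.
Qed.

Section Fan.
Variable h : nat.
Hypothesis Hh : (h <= n)%N.
Hypothesis Hqh : Q h = qmin.

Lemma U_ge0 : 0 <= U. Proof. exact: ltW U_gt0. Qed.

Lemma fan_ub : (1 < n)%N ->
  cost betaI (fan_variant ch h) q <= n%:R * (bmax * (3%:R * U)).
Proof.
move=> n1; have Hl := @leaves_fan h n1 Hh.
have [_ _ _ H4 _] := @build_inv (fan_tree n h) 0 ltac:(by rewrite add0n Hl).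
rewrite build_end add0n Hl in H4.
have bm0 : 0 <= bmax by apply: le_trans bmax_ge2; rewrite ler0n.
change (\sum_(x <- fan_variant ch h) ph x <= n%:R * (bmax * (3%:R * U))).
apply: le_trans (@sum_le_const _ ph _ (bmax * (3%:R * U)) _) _.
  move=> [K [[a b] c]] xin.
  have [h1 h2 h3 h4 [cx [cy [Hph Hcx Hcy Gx Gy]]]] := H4 _ xin.
  have pat := @fan_idx h _ Hh xin.
  rewrite /ia /ib /ic /= in h1 h2 h3 h4 Hph Hcx Hcy Gx Gy pat.
  apply: le_trans Hph _; apply: ler_wpM2l => //.
  rewrite (_ : 3%:R * U = U + U + U); last by ring.
  have hb : (0 < b)%N by case/andP: h3 => h5 h6; apply: leq_ltn_trans h5.
  case: pat => [[ea ec]|[[ec eb]|[ea [eb ec]]]]; subst.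
  - apply: lerD; first apply: lerD.
    + rewrite Hqh -mulrA; apply: le_trans minS_U; apply: ler_wpM2l; first exact: Q0.
      by apply: pairS.
    + by case: cx Hcx Gx => _ _; [rewrite Hqh; exact: mincubeU | exact: U_ge0].
    + case: cy Hcy Gy => _ Gy; last exact: U_ge0.
      by apply: cubeU => //; apply: Gy.
  - apply: lerD; first apply: lerD.
    + rewrite Hqh mulrC; apply: le_trans minS_U; apply: ler_wpM2l; first exact: Q0.
      by case/andP: h3 => _ h5; apply: pairS; apply: leq_trans (ltnW h5) h2.
    + case: cx Hcx Gx => Hcx Gx; last exact: U_ge0.
      case/andP: h3 => _ h5.
      by rewrite (Hcx isT); apply: cubeU; [rewrite /= (leq_trans (ltnW h5) h2)|apply: Gx].
    + by case: cy Hcy Gy => Hcy _; [rewrite Hqh; exact: mincubeU | exact: U_ge0].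
  - apply: lerD; first apply: lerD.
    + rewrite Hqh (mulrC (Q 0)) -mulrA; apply: le_trans minS_U.
      by apply: ler_wpM2l; [exact: Q0|exact: QnS].
    + by case: cx Hcx Gx => Hcx _; [rewrite (Hcx isT) Hqh; exact: mincubeU | exact: U_ge0].
    + by case: cy Hcy Gy => Hcy _; [rewrite -(Hcy isT) Hqh; exact: mincubeU | exact: U_ge0].
apply: ler_wpM2r; first by rewrite !mulr_ge0 ?U_ge0.
rewrite ler_nat /fan_variant /variant_of build_size Hl; exact: leq_pred.
Qed.
End Fan.

Lemma var_lb t : leaves t = n -> (1 < n)%N ->
  bmin * U <= (n + n).+1%:R * cost betaI (variant_of ch t) q.
Proof.
move=> Hl n1.
have [_ _ _ H4 [H5 H6]] := @build_inv t 0 ltac:(by rewrite add0n Hl).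
rewrite build_end add0n Hl in H4 H5 H6.
have bm0 : 0 <= bmin by exact: ltW bmin_gt0.
change (bmin * U <= (n + n).+1%:R * \sum_(x <- variant_of ch t) ph x).
rewrite /variant_of.
set C := \sum_(x <- (build ch t 0).2) ph x.
have nonneg : forall y, List.In y (build ch t 0).2 -> 0 <= ph y.
  move=> y yin; have [_ _ _ hlb _] := H4 y yin; apply: le_trans hlb.
  by rewrite mulr_ge0 // !mulr_ge0 ?Q0.
have phC : forall y, List.In y (build ch t 0).2 -> ph y <= C.
  by move=> y yin; apply: sum_ge_elem.
have C0 : 0 <= C by apply: sum_ge0.
have Lpair : forall j, (j < n)%N -> bmin * (qmin * (Q j * Q j.+1)) <= C.
  move=> j hj.
  have [x [xin [pat _]]] := H6 j.+1 ltac:(by rewrite /= hj) n1.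
  move: x xin pat => [K [[a b] c]] xin pat.
  have [h1 h2 h3 hlb _] := H4 _ xin.
  apply: le_trans (phC _ xin); apply: le_trans hlb; apply: ler_wpM2l => //.
  rewrite /ia /ib /ic /= in h1 h2 h3 pat *.
  case: pat => [[ea eb]|[eb ec]]; subst.
  - rewrite mulrC; apply: ler_wpM2l; first by rewrite mulr_ge0 ?Q0.
    by apply: Qmin.
  - rewrite -mulrA; apply: ler_wpM2r; first by rewrite mulr_ge0 ?Q0.
    by apply: Qmin; apply: ltnW; apply: leq_trans h2; case/andP: h3 => h5 _; apply: ltnW.
have Lcube : forall i, (0 < i <= n)%N -> G i -> bmin * Q i ^+ 3 <= C.
  move=> i hi gi; have [x [xin [_ hc]]] := H6 i hi n1.
  by apply: le_trans (phC x xin); apply: hc.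
have Ltop : bmin * (qmin * (Q 0 * Q n)) <= C.
  have [x [xin [ea ec]]] := H5 n1.
  move: x xin ea ec => [K [[a b] c]] xin ea ec.
  have [h1 h2 h3 hlb _] := H4 _ xin.
  apply: le_trans (phC _ xin); apply: le_trans hlb; apply: ler_wpM2l => //.
  rewrite /ia /ib /ic /= in h1 h2 h3 ea ec *; subst.
  rewrite (mulrC (Q 0) (Q b)) -mulrA; apply: ler_wpM2r; first by rewrite mulr_ge0 ?Q0.
  by apply: Qmin; case/andP: h3 => _ /ltnW.
have P1 : bmin * (qmin * \sum_(j <- iota 0 n) Q j * Q j.+1) <= n%:R * C.
  rewrite [qmin * _]mulr_sumr [bmin * _]mulr_sumr.
  apply: le_trans (@sum_le_const _ (fun j => bmin * (qmin * (Q j * Q j.+1))) (iota 0 n) C _) _.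
    by move=> j /In_iota /andP [_ hj]; apply: Lpair.
  by rewrite size_iota.
have P3 : bmin * L <= n%:R * C.
  rewrite /L [bmin * _]mulr_sumr.
  apply: le_trans (@sum_le_const _ (fun j => bmin * (if G j then Q j ^+ 3 else 0)) (iota 1 n) C _) _.
    move=> j /In_iota; rewrite add1n ltnS => hj.
    by case E: (G j); [apply: Lcube|rewrite mulr0].
  by rewrite size_iota.
rewrite /U /S !mulrDr -addn1 !natrD !mulrDl mul1r (addrAC (n%:R * C)).
by rewrite !lerD.
Qed.

End Bounds.
Lemma foldr_min_le' {T} (F : T -> R) z s A : List.In A (z :: s) ->
  foldr Num.min (F z) (map F s) <= F A.
Proof.
elim: s => [|w s IH] /=; first by case=> [<-|//].
case=> [e|[e|H]]; rewrite ge_min.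
- by rewrite IH ?orbT //; left.
- by subst A; rewrite lexx.
- by rewrite IH ?orbT //; right.
Qed.

Lemma minR_le {T} (F : T -> R) s A : List.In A s -> minR (map F s) <= F A.
Proof. by case: s => [|z s] //= H; apply: foldr_min_le'. Qed.

Lemma minR_ge {T} (F : T -> R) s lb : (forall A, List.In A s -> lb <= F A) ->
  s <> [::] -> lb <= minR (map F s).
Proof.
case: s => [|z s] // H _ /=.
elim: s H => [|w s IH] H /=; first by apply: H; left.
rewrite le_min H /=; last by right; left.
by apply: IH => A [e|HA]; apply: H; [left|right; right].
Qed.

Lemma In_flatten {T} {x : T} {ss} : List.In x (flatten ss) ->
  exists s, List.In s ss /\ List.In x s.
Proof.
elim: ss => [|s ss IH] //= /List.in_app_iff [H|/IH [s' [h1 h2]]].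
  by exists s; split => //; left.
by exists s'; split => //; right.
Qed.

Lemma In_map {T U} {f : T -> U} {y s} : List.In y (map f s) ->
  exists x, List.In x s /\ y = f x.
Proof.
elim: s => [|z s IH] //= [<-|/IH [x [h1 h2]]]; first by exists z; split => //; left.
by exists x; split => //; right.
Qed.

Lemma trees_leaves fuel : forall k t, List.In t (trees_fuel fuel k) -> leaves t = k.
Proof.
elim: fuel => [|f IH] k t //=.
case: eqP => [-> [<-|//]|hk] //.
move=> Hin; have [s [Hs Ht]] := In_flatten Hin.
have [i [hi es]] := In_map Hs; subst s.
have [s' [Hs' Ht']] := In_flatten Ht.
have [l [hl es']] := In_map Hs'; subst s'.
have [r [hr et]] := In_map Ht'; subst t.
rewrite /= (IH _ _ hl) (IH _ _ hr).
move: (@In_iota _ _ _ hi) hk; clear; lia.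
Qed.

Lemma argmin_ex : exists2 m, (m <= n)%N & forall j, (j <= n)%N -> (q m <= q j)%N.
Proof.
elim: n => [|k [m hm hmin]]; first by exists 0%N => // j; rewrite leqn0 => /eqP ->.
case: (ltnP (q k.+1) (q m)) => hlt.
  exists k.+1 => // j; rewrite leq_eqVlt => /orP [/eqP ->//|hj].
  by apply: ltnW; apply: leq_trans hlt (hmin _ _).
exists m => [|j]; first exact: leqW.
by rewrite leq_eqVlt => /orP [/eqP ->//|hj]; apply: hmin.
Qed.


Lemma alg_id (nn N b1 b2 u : R) : b1 != 0 -> N != 0 ->
  nn * (b2 * (3%:R * u)) = nn * 3%:R * N * b2 / b1 * (b1 * u / N).
Proof. by move=> h1 h2; field; rewrite h1 h2. Qed.

Lemma main_bound (sel : nat -> nat) : (4 <= n)%N ->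
  (forall j, (j <= n)%N -> (sel j <= n)%N /\ same_class ch (sel j) j) ->
  penalty betaI ch [seq fan_variant ch (sel j) | j <- iota 0 n.+1] q <=
  (n * 3 * (n + n).+1)%:R * bmax / bmin.
Proof.
move=> n4 Hsel.
have n1 : (1 < n)%N by apply: leq_trans n4.
have [m hm hmin] := argmin_ex.
have [hs hsc] := Hsel m hm.
have Hqh : Q (sel m) = Q m by apply: Qsc.
have bmin0 := bmin_gt0; have bm0 : 0 <= bmax by apply: le_trans bmax_ge2; rewrite ler0n.
have U0 : 0 < U m by apply: U_gt0.
have B0 : 0 <= (n * 3 * (n + n).+1)%:R * bmax / bmin.
  by rewrite divr_ge0 ?mulr_ge0 ?ler0n // ltW.
rewrite /penalty.
have hin : List.In m (iota 0 n.+1) by apply: mem_In; rewrite mem_iota add0n ltnS hm.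
have hx : minR [seq cost betaI z q | z <- [seq fan_variant ch (sel j) | j <- iota 0 n.+1]]
   <= n%:R * (bmax * (3%:R * U m)).
  rewrite -map_comp; apply: le_trans (minR_le _ _ _ hin) _.
  by apply: fan_ub.
move: hx; set xx := minR _ => hx.
case E: (all_variants ch) => [|A As].
  by rewrite /= invr0 mulr0 sub0r; apply: le_trans B0; rewrite lerN10.
set y := minR _.
have N0 : (0 : R) < (n + n).+1%:R by rewrite ltr0n.
have hy : bmin * U m / (n + n).+1%:R <= y.
  rewrite /y -E; apply: minR_ge; last by rewrite E.
  move=> A' hA'; rewrite /all_variants in hA'.
  have [t [ht ->]] := In_map hA'.
  have lt := @trees_leaves _ _ _ ht.
  rewrite ler_pdivrMr // [_ * (n + n).+1%:R]mulrC; by apply: var_lb.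
have ypos : 0 < y by apply: lt_le_trans hy; rewrite divr_gt0 ?mulr_gt0.
have key : xx / y <= (n * 3 * (n + n).+1)%:R * bmax / bmin.
  rewrite ler_pdivrMr //; apply: le_trans hx _.
  have e : n%:R * (bmax * (3%:R * U m)) =
     (n * 3 * (n + n).+1)%:R * bmax / bmin * (bmin * U m / (n + n).+1%:R).
    by rewrite !natrM; apply: alg_id; rewrite gt_eqF.
  by rewrite e; apply: ler_wpM2l.
rewrite lerBlDr; apply: le_trans key _; by rewrite lerDl ler01.
Qed.

End R.

Theorem theorem2 (R : realFieldType) (betaI : kname -> R) (ch : chain)
    (sel : nat -> nat) :
  (forall k, 0 < betaI k) ->
  (4 <= size ch)%N ->
  (forall j, (j <= size ch)%N -> (sel j <= size ch)%N /\ same_class ch (sel j) j) ->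
  (forall i j, (i <= size ch)%N -> (j <= size ch)%N -> same_class ch i j ->
     sel i = sel j) ->
  finite_total_penalty betaI ch [seq fan_variant ch (sel j) | j <- iota 0 (size ch).+1].
Proof.
move=> Hb n4 Hsel _; split; first by [].
exists ((size ch * 3 * (size ch + size ch).+1)%:R * @bmax R betaI / @bmin R betaI).
by move=> q Hq; apply: main_bound.
Qed.
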